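(* Let $\diamond$ be the operation on $\mathbb{Z}$ given by $x\diamond y=x-\operatorname{sgn}(y-x)$. Then $(\mathbb{Z},\diamond)$ satisfies $\mathrm{x}\simeq(\mathrm{x}\diamond\mathrm{y})\diamond((\mathrm{x}\diamond\mathrm{y})\diamond\mathrm{y})$ but does not satisfy $\mathrm{x}\simeq(\mathrm{x}\diamond(\mathrm{x}\diamond\mathrm{y}))\diamond\mathrm{y}$. Consequently the first law does not imply the second.
   Context: $\operatorname{sgn}(h)$ is $1$ for $h>0$, $-1$ for $h<0$, and $0$ for $h=0$. A magma satisfies a law if the identity holds for all assignments of variables. *)

(* Defs.v *)
From Stdlib Require Import ZArith.
Open Scope Z_scope.

Definition diamond (x y : Z) : Z := x - Z.sgn (y - x).

Definition law1 {M : Type} (op : M -> M -> M) : Prop :=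
  forall x y : M, x = op (op x y) (op (op x y) y).

Definition law2 {M : Type} (op : M -> M -> M) : Prop :=
  forall x y : M, x = op (op x (op x y)) y.

(* Main.v *)
Require Import Defs.
From Stdlib Require Import ZArith Lia.

Lemma sgn_pos z : z > 0 -> Z.sgn z = 1. Proof. intros; apply Z.sgn_pos; lia. Qed.
Lemma sgn_neg z : z < 0 -> Z.sgn z = -1. Proof. intros; apply Z.sgn_neg; lia. Qed.
Lemma sgn_0 z : z = 0 -> Z.sgn z = 0. Proof. intros ->; reflexivity. Qed.

Lemma l1 : law1 diamond.
Proof.
  intros x y; unfold diamond.
  destruct (Z.lt_trichotomy x y) as [H|[H|H]].
  - rewrite (sgn_pos (y - x)) by lia.
    rewrite (sgn_pos (y - (x - 1))) by lia.
    rewrite (sgn_neg (x - 1 - 1 - (x - 1))) by lia. lia.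
  - subst. rewrite (sgn_0 (y - y)) by lia.
    rewrite (sgn_0 (y - (y - 0))) by lia.
    rewrite (sgn_0 (y - 0 - 0 - (y - 0))) by lia. lia.
  - rewrite (sgn_neg (y - x)) by lia.
    rewrite (sgn_neg (y - (x - -1))) by lia.
    rewrite (sgn_pos (x - -1 - -1 - (x - -1))) by lia. lia.
Qed.

Lemma nl2 : ~ law2 diamond.
Proof. intros H. specialize (H 0 1). vm_compute in H. discriminate. Qed.

Theorem mainTheorem14 :
  law1 diamond /\ ~ law2 diamond /\
  ~ (forall (M : Type) (op : M -> M -> M), law1 op -> law2 op).
Proof.
  split; [exact l1|split; [exact nl2|]].
  intros H. apply nl2. apply H. exact l1.
Qed.
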